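(* Let $K$ be an alphabet space and $\sigma:K\to K^+$ a generalized substitution on $K$. Then the induced map $\sigma:K^{\mathbb Z}\to K^{\mathbb Z}$ is continuous.
   Context: An alphabet space is a compact zero-dimensional metric space $K$ with at least two points; $K^+$ is the set of nonempty finite words over $K$, and $K^{\mathbb Z}$ carries the product topology. A generalized substitution is a map $\sigma:K\to K^+$ such that $a\mapsto|\sigma(a)|$ is continuous and, for each $j$, $a\mapsto$ ($j$-th letter of $\sigma(a)$) is continuous on $\{a:|\sigma(a)|\ge j\}$. Its extension to $K^{\mathbb Z}$ is $\sigma(\ldots x_{-2}x_{-1}.x_0x_1\ldots)=\ldots\sigma(x_{-2})\sigma(x_{-1}).\sigma(x_0)\sigma(x_1)\ldots$, with $\sigma(x_0)$ starting at coordinate $0$. *)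

(* Defs.v *)
From HB Require Import structures.
From mathcomp Require Import all_boot all_order all_algebra.
From mathcomp Require Import all_classical all_reals all_analysis.
Set Implicit Arguments. Unset Strict Implicit. Unset Printing Implicit Defensive.
Import Order.TTheory GRing.Theory Num.Theory.
Local Open Scope classical_set_scope.
Local Open Scope ring_scope.

Definition alphabet_space (R : realType) (K : metricType R) : Prop :=
  [/\ compact [set: K], zero_dimensional K & exists a b : K, a != b].

(* Words in K^+ are represented as elements of seq K; nonemptiness is part
   of the definition of a generalized substitution.  Letters are indexed
   from 0: "j-th letter" (1-based) is [nth _ (sigma a) (j-1)], defined on
   [j-1 < size (sigma a)], i.e. |sigma(a)| >= j.  nat carries the discrete
   topology. *)
Definition gen_subst (R : realType) (K : metricType R) (sigma : K -> seq K)
    : Prop :=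
  [/\ forall a, (0 < size (sigma a))%N,
      continuous (fun a => size (sigma a))
    & forall j : nat,
        {within [set a | (j < size (sigma a))%N],
          continuous (fun a => nth a (sigma a) j)}].

(* The extension of sigma to K^Z:
   ... sigma(x_{-2}) sigma(x_{-1}) . sigma(x_0) sigma(x_1) ...
   Coordinate m >= 0 is letter m of sigma(x_0) sigma(x_1) ... ;
   coordinate -(m+1) (= Negz m) is letter m of the right-to-left reading
   rev(sigma(x_{-1})) rev(sigma(x_{-2})) ... .  Since all words are
   nonempty, the first m+1 words suffice; the default value is never used. *)
Definition subst_ext (K : Type) (sigma : K -> seq K) (x : int -> K) : int -> K :=
  fun n => match n with
  | Posz m => nth (x 0) (flatten [seq sigma (x (Posz i)) | i <- iota 0 m.+1]) m
  | Negz m => nth (x 0) (flatten [seq rev (sigma (x (Negz i))) | i <- iota 0 m.+1]) m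
  end.

(* Main.v *)
Require Import Defs.
From HB Require Import structures.
From mathcomp Require Import all_boot all_order all_algebra.
From mathcomp Require Import all_classical all_reals all_analysis.
Import Order.TTheory GRing.Theory Num.Theory.
Local Open Scope classical_set_scope.

Lemma near_size (R : realType) (K : metricType R) (sigma : K -> seq K)
  (Hsz : continuous (fun a => size (sigma a))) (k : int) (x : {ptws int -> K}) :
  \forall y \near x, size (sigma (y k)) = size (sigma (x k)).
Proof.
have hp := @proj_continuous int (fun _ => K) k x.
have hs := Hsz (x k).
have := cvg_comp _ _ hp hs.
move/(_ [set n | n = size (sigma (x k))]).
apply; rewrite nbhs_principalE; exact/principal_filterP.
Qed.

Lemma near_sizes (R : realType) (K : metricType R) (sigma : K -> seq K)
  (Hsz : continuous (fun a => size (sigma a))) (e : nat -> int) (x : {ptws int -> K}) m :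
  \forall y \near x, forall i, (i < m)%N -> size (sigma (y (e i))) = size (sigma (x (e i))).
Proof.
elim: m => [|m IH].
  apply: (@filterS _ _ (@nbhs_filter {ptws int -> K} x) setT); last exact: filterT.
  by move=> y _ i.
have F := @nbhs_filter {ptws int -> K} x.
apply: (@filterS _ (nbhs x) F _ _ _ (@filterI _ (nbhs x) F _ _ (@near_size R K sigma Hsz (e m) x) IH)).
move=> y [H1 H2] i; rewrite ltnS leq_eqVlt => /orP[/eqP->//|].
exact: H2.
Qed.

Lemma le_size_flatten (T : Type) (l : seq (seq T)) :
  all (fun s => (0 < size s)%N) l -> (size l <= size (flatten l))%N.
Proof.
elim: l => [//|s l IH] /=; move=> /andP[hs hl]; rewrite size_cat.
by rewrite -add1n leq_add // IH.
Qed.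

Lemma coord_cont (R : realType) (K : metricType R) (sigma : K -> seq K)
  (Hpos : forall a, (0 < size (sigma a))%N)
  (Hsz : continuous (fun a => size (sigma a)))
  (Hnth : forall j : nat, {within [set a | (j < size (sigma a))%N],
          continuous (fun a => nth a (sigma a) j)})
  (t : seq K -> seq K) (ht : forall s, size (t s) = size s)
  (htn : forall n o, (o < n)%N -> exists2 j, (j < n)%N &
      forall (s : seq K) d, size s = n -> nth d (t s) o = nth d s j)
  (e : nat -> int) (m : nat) (x : {ptws int -> K}) :
  (fun y : {ptws int -> K} => nth (y 0) (flatten [seq t (sigma (y (e i))) | i <- iota 0 m.+1]) m)
   @ x --> nth (x 0) (flatten [seq t (sigma (x (e i))) | i <- iota 0 m.+1]) m.
Proof.
have F := @nbhs_filter {ptws int -> K} x.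
set ssx := [seq t (sigma (x (e i))) | i <- iota 0 m.+1].
have Hszssx : size ssx = m.+1 by rewrite size_map size_iota.
have Hm : (m < sumn (shape ssx))%N.
  rewrite -size_flatten; apply: (leq_trans _ (@le_size_flatten _ ssx _)); first by rewrite Hszssx.
  by apply/allP => s /mapP[i _ ->]; rewrite ht.
set sh := shape ssx.
set r := reshape_index sh m; set o := reshape_offset sh m.
have hr : (r < m.+1)%N by rewrite -Hszssx -(size_map size) reshape_indexP.
have hnth : nth [::] ssx r = t (sigma (x (e r))).
  by rewrite (nth_map 0%N) ?size_iota // nth_iota.
have ho : (o < size (sigma (x (e r))))%N.
  have := reshape_offsetP Hm; rewrite -/sh -/r -/o /sh /shape (nth_map [::]) ?Hszssx //.
  by rewrite hnth ht.
have [j hj htj] := htn _ _ ho.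
pose g := fun a : K => nth a (sigma a) j.
have Heq : forall y : {ptws int -> K},
    (forall i, (i < m.+1)%N -> size (sigma (y (e i))) = size (sigma (x (e i)))) ->
    nth (y 0) (flatten [seq t (sigma (y (e i))) | i <- iota 0 m.+1]) m = g (y (e r)).
  move=> y Hy.
  have Hsh : shape [seq t (sigma (y (e i))) | i <- iota 0 m.+1] = sh.
    rewrite /sh /ssx /shape -!map_comp; apply/eq_in_map => i.
    by rewrite mem_iota add0n => /andP[_ hi] /=; rewrite !ht Hy.
  rewrite nth_flatten Hsh -/r -/o (nth_map 0%N) ?size_iota // nth_iota // add0n.
  rewrite htj; last by rewrite Hy.
  by rewrite /g (set_nth_default (y (e r))) // Hy.
rewrite (Heq x) //.
have gc : {for x (e r), continuous g}.
  have oA : open [set a : K | (j < size (sigma a))%N].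
    have := proj1 (continuousP _) Hsz [set k | (j < k)%N] (discrete_open _).
    by [].
  move: (Hnth j); rewrite (continuous_open_subspace _ oA).
  by apply; rewrite inE.
apply: cvg_trans; last exact: (cvg_comp _ _ (@proj_continuous int (fun _ => K) (e r) x) gc).
apply: near_eq_cvg.
apply: (@filterS _ (nbhs x) F _ _ _ (@near_sizes R K sigma Hsz e x m.+1)).
by move=> y Hy; rewrite Heq.
Qed.

Lemma ptws_cvg (K : topologicalType) (F : set_system {ptws int -> K}) (FF : Filter F)
  (f : {ptws int -> K}) : (forall n, (fun g => g n) @ F --> f n) -> F --> f.
Proof.
move=> H; apply/cvg_sup => i.
move=> U [? /= [[W oW <-]]] /= Wsfz /filterS; apply; apply: H.
exact: open_nbhs_nbhs.
Qed.

Theorem mainTheorem16 (R : realType) (K : metricType R) (sigma : K -> seq K) :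
  alphabet_space K -> gen_subst sigma ->
  continuous (subst_ext sigma : {ptws int -> K} -> {ptws int -> K}).
Proof.
move=> _ [Hpos Hsz Hnth] x.
have F := @nbhs_filter {ptws int -> K} x.
apply: (@ptws_cvg K _ (fmap_filter _ _)) => -[m|m].
- apply: (@coord_cont R K sigma Hpos Hsz Hnth id _ _ Posz m x) => // n o ho.
  by exists o.
- apply: (@coord_cont R K sigma Hpos Hsz Hnth (@rev K) (@size_rev K) _ Negz m x) => n o ho.
  exists (n - o.+1)%N; first by rewrite subnSK // leq_subr.
  by move=> s d hs; rewrite nth_rev hs.
Qed.
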